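(* Let $\mathcal{B}$ be a prime Banach algebra over $\mathbb{R}$ or $\mathbb{C}$, and let $\mathcal{H}_1,\mathcal{H}_2$ be non-empty open subsets of $\mathcal{B}$. Suppose $\mathcal{B}$ admits a continuous automorphism $f$ such that for every $(x,y)\in\mathcal{H}_1\times\mathcal{H}_2$ there exist positive integers $p=p(x,y)$, $q=q(x,y)$ with $$f(x^{p}\circ y^{q})+[x^{p},y^{q}]\in Z(\mathcal{B}).$$ Then $\mathcal{B}$ is commutative.
   Context: $Z(\mathcal{B})$ denotes the center of $\mathcal{B}$. For $x,y\in\mathcal{B}$, $x\circ y=xy+yx$ and $[x,y]=xy-yx$. $\mathcal{B}$ is prime if $x\mathcal{B}y=\{0\}$ implies $x=0$ or $y=0$. An automorphism of $\mathcal{B}$ is a bijective map $f:\mathcal{B}\to\mathcal{B}$ with $f(x+y)=f(x)+f(y)$ and $f(xy)=f(x)f(y)$ for all $x,y$. *)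

(* Defs.v *)
From HB Require Import structures.
From mathcomp Require Import all_boot all_order all_algebra.
From mathcomp Require Import all_classical all_reals all_analysis.
Set Implicit Arguments. Unset Strict Implicit. Unset Printing Implicit Defensive.
Import Order.TTheory GRing.Theory Num.Theory.
Import numFieldNormedType.Exports.
Local Open Scope classical_set_scope.
Local Open Scope ring_scope.

Definition banach_algebra_mul (R : realType) (B : completeNormedModType R)
    (mul : B -> B -> B) : Prop :=
  [/\ (forall x y z, mul x (mul y z) = mul (mul x y) z),
      (forall (a : R) x y z, mul (a *: x + y) z = a *: mul x z + mul y z),
      (forall (a : R) x y z, mul z (a *: x + y) = a *: mul z x + mul z y)
    & (forall x y, `|mul x y| <= `|x| * `|y|)].

(* positive powers in a possibly non-unital algebra:
   bpow mul x p = x^p for p >= 1 (p = 0 is never used). *)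
Definition bpow (T : Type) (mul : T -> T -> T) (x : T) (p : nat) : T :=
  iter p.-1 (mul x) x.

Definition jordan (T : zmodType) (mul : T -> T -> T) (x y : T) : T :=
  mul x y + mul y x.
Definition lie_comm (T : zmodType) (mul : T -> T -> T) (x y : T) : T :=
  mul x y - mul y x.

Definition alg_center (T : Type) (mul : T -> T -> T) : set T :=
  [set z | forall x, mul z x = mul x z].

Definition prime_alg (T : zmodType) (mul : T -> T -> T) : Prop :=
  forall a b : T, (forall x, mul (mul a x) b = 0) -> a = 0 \/ b = 0.

Definition automorphism (T : zmodType) (mul : T -> T -> T) (f : T -> T) : Prop :=
  [/\ bijective f, (forall x y, f (x + y) = f x + f y)
    & (forall x y, f (mul x y) = mul (f x) (f y))].

Definition commutative_alg (T : Type) (mul : T -> T -> T) : Prop :=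
  forall x y, mul x y = mul y x.

(* Main.v *)
Require Import Defs.
From HB Require Import structures.
From mathcomp Require Import all_boot all_order all_algebra.
From mathcomp Require Import all_classical all_reals all_analysis.
From mathcomp Require Import ssrAC lra.
Import Order.TTheory GRing.Theory Num.Theory.
Import numFieldNormedType.Exports.
Local Open Scope classical_set_scope.
Local Open Scope ring_scope.
Set Implicit Arguments. Unset Strict Implicit. Unset Printing Implicit Defensive.
Section Alg.
Variables (R : realType) (B : normedModType R) (m : B -> B -> B).
Hypothesis massoc : forall x y z, m x (m y z) = m (m x y) z.
Hypothesis mlinl : forall (a : R) x y z, m (a *: x + y) z = a *: m x z + m y z.
Hypothesis mlinr : forall (a : R) x y z, m z (a *: x + y) = a *: m z x + m z y.

Lemma m0l z : m 0 z = 0.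
Proof.
have := mlinl (-1) z z z; rewrite scaleN1r addNr scaleN1r addNr; by [].
Qed.
Lemma m0r z : m z 0 = 0.
Proof.
have := mlinr (-1) z z z; rewrite scaleN1r addNr scaleN1r addNr; by [].
Qed.
Lemma mDl x y z : m (x + y) z = m x z + m y z.
Proof. by have := mlinl 1 x y z; rewrite !scale1r. Qed.
Lemma mDr x y z : m z (x + y) = m z x + m z y.
Proof. by have := mlinr 1 x y z; rewrite !scale1r. Qed.
Lemma mZl (a : R) x z : m (a *: x) z = a *: m x z.
Proof. by have := mlinl a x 0 z; rewrite !addr0 m0l addr0. Qed.
Lemma mZr (a : R) x z : m z (a *: x) = a *: m z x.
Proof. by have := mlinr a x 0 z; rewrite !addr0 m0r addr0. Qed.
Lemma mNl x z : m (- x) z = - m x z.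
Proof. by rewrite -scaleN1r mZl scaleN1r. Qed.
Lemma mNr x z : m z (- x) = - m z x.
Proof. by rewrite -scaleN1r mZr scaleN1r. Qed.
Lemma mBl x y z : m (x - y) z = m x z - m y z.
Proof. by rewrite mDl mNl. Qed.
Lemma mBr x y z : m z (x - y) = m z x - m z y.
Proof. by rewrite mDr mNr. Qed.

Lemma bpow1 x : bpow m x 1 = x. Proof. by []. Qed.
Lemma bpowS x k : bpow m x k.+2 = m x (bpow m x k.+1). Proof. by []. Qed.

Lemma bpowSr x k : bpow m x k.+2 = m (bpow m x k.+1) x.
Proof.
elim: k => [|k IH]; first by []. by rewrite [in LHS]bpowS [in LHS]IH massoc.
Qed.

Lemma bpowD x i j : m (bpow m x i.+1) (bpow m x j.+1) = bpow m x (i + j).+2.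
Proof.
elim: i => [//|i IH]; by rewrite bpowS -massoc IH -bpowS.
Qed.


Definition pts (t : R) := exists k : nat, t = (k.+1%:R)^-1.

Definition polyon (N : nat) (g : R -> B) :=
  exists c : nat -> B, forall t, pts t -> g t = \sum_(j < N) t ^+ j *: c j.

Lemma polyon_ext N g g' : polyon N g -> (forall t, pts t -> g t = g' t) -> polyon N g'.
Proof. by move=> [c Hc] E; exists c => t Pt; rewrite -E // Hc. Qed.

Lemma polyon_pad N N' g : (N <= N')%N -> polyon N g -> polyon N' g.
Proof.
move=> le [c Hc]; exists (fun j => if (j < N)%N then c j else 0) => t Pt.
rewrite Hc // (big_ord_widen N' (fun j => t ^+ j *: c j) le) big_mkcond /=.
by apply: eq_bigr => i _; case: ifP => _; rewrite ?scaler0.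
Qed.

Lemma polyon_const a : polyon 1 (fun _ => a).
Proof. by exists (fun _ => a) => t _; rewrite big_ord1 expr0 scale1r. Qed.

Lemma polyon_add N g h : polyon N g -> polyon N h -> polyon N (fun t => g t + h t).
Proof.
move=> [c Hc] [d Hd]; exists (fun j => c j + d j) => t Pt.
by rewrite Hc // Hd // -big_split /=; apply: eq_bigr => i _; rewrite scalerDr.
Qed.

Lemma polyon_shift N g : polyon N g -> polyon N.+1 (fun t => t *: g t).
Proof.
move=> [c Hc]; exists (fun j => if j is j'.+1 then c j' else 0) => t Pt.
rewrite Hc // big_ord_recl /= scaler0 add0r scaler_sumr.
by apply: eq_bigr => i _; rewrite scalerA exprS.
Qed.

Lemma polyon_lin (L : B -> B) N g :
  (forall x y, L (x + y) = L x + L y) ->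
  (forall t j v, pts t -> L (t ^+ j *: v) = t ^+ j *: L v) ->
  polyon N g -> polyon N (fun t => L (g t)).
Proof.
move=> Ladd LZ [c Hc]; exists (fun j => L (c j)) => t Pt.
have L0 : L 0 = 0.
  by have := Ladd 0 0; rewrite addr0 => /eqP; rewrite -subr_eq0 opprD addrA subrr sub0r oppr_eq0 => /eqP.
rewrite Hc // (big_morph L Ladd L0); apply: eq_bigr => i _; exact: LZ.
Qed.

Lemma polyon_mull a N g : polyon N g -> polyon N (fun t => m a (g t)).
Proof. by move=> H; exact: (@polyon_lin (m a) N g (fun x y => mDr x y a) (fun t j v _ => mZr (t ^+ j) v a) H). Qed.
Lemma polyon_mulr a N g : polyon N g -> polyon N (fun t => m (g t) a).
Proof. by move=> H; exact: (@polyon_lin (fun x => m x a) N g (fun x y => mDl x y a) (fun t j v _ => mZl (t ^+ j) v a) H). Qed.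

Lemma polyon_mul N M g h : polyon N g -> polyon M h ->
  polyon (N + M) (fun t => m (g t) (h t)).
Proof.
elim: N g => [|N IH] g [c Hc] Hh.
  exists (fun _ => 0) => t Pt; rewrite Hc // big_ord0 m0l.
  by rewrite big1 // => i _; rewrite scaler0.
have HG : polyon N (fun t => \sum_(j < N) t ^+ j *: c j.+1) by exists (fun j => c j.+1).
have := polyon_shift (IH _ HG Hh); rewrite -addSn => H2.
have H1 : polyon (N.+1 + M) (fun t => m (c 0%N) (h t)).
  by apply: polyon_pad (polyon_mull _ Hh); rewrite leq_addl.
apply: (polyon_ext (polyon_add H1 H2)) => t Pt.
rewrite Hc // big_ord_recl /= expr0 scale1r mDl; congr (_ + _).
rewrite -mZl scaler_sumr; congr (m _ _); apply: eq_bigr => i _.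
by rewrite scalerA exprS.
Qed.

Lemma small_zero (v : B) (M : R) (K : nat) :
  (forall k, (K <= k)%N -> `|v| <= (k.+1%:R)^-1 * M) -> v = 0.
Proof.
move=> H; apply/eqP; apply: contraT => v0.
have nv : 0 < `|v| by rewrite normr_gt0.
have := H K (leqnn _) => HK.
have M0 : 0 < M.
  have := lt_le_trans nv HK; rewrite pmulr_rgt0 //.
set n := Num.truncn (M / `|v|).
have := H (K + n)%N (leq_addr _ _).
have Hn : M / `|v| < n.+1%:R by exact: truncnS_gt.
have Hn2 : M / `|v| < (K + n).+1%:R.
  apply: (lt_le_trans Hn); rewrite ler_nat ltnS leq_addl //.
rewrite mulrC ler_pdivlMr ?ltr0n // => H3.
rewrite ltr_pdivrMr // in Hn2.
rewrite mulrC in H3; have := lt_le_trans Hn2 H3; by rewrite ltxx.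
Qed.

Lemma poly_bound N (c : nat -> B) t : 0 <= t <= 1 ->
  `|\sum_(j < N) t ^+ j *: c j| <= \sum_(j < N) `|c j|.
Proof.
move=> /andP[t0 t1]; apply: (le_trans (ler_norm_sum _ _ _)); apply: ler_sum => i _.
rewrite normrZ ger0_norm ?exprn_ge0 //.
by apply: ler_piMl => //; apply: exprn_ile1.
Qed.

Lemma vanish N (c : nat -> B) K :
  (forall k, (K <= k)%N -> \sum_(j < N) ((k.+1%:R)^-1) ^+ j *: c j = 0) ->
  forall t, \sum_(j < N) t ^+ j *: c j = 0.
Proof.
elim: N c => [|N IH] c H t; first by rewrite big_ord0.
have E : forall s, \sum_(j < N.+1) s ^+ j *: c j = c 0%N + s *: \sum_(j < N) s ^+ j *: c j.+1.
  move=> s; rewrite big_ord_recl expr0 scale1r scaler_sumr; congr (_ + _).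
  by apply: eq_bigr => i _; rewrite scalerA exprS.
have c0 : c 0%N = 0.
  apply: (@small_zero (c 0%N) (\sum_(j < N) `|c j.+1|) K) => k Hk.
  have := H k Hk; rewrite E => /eqP; rewrite addr_eq0 => /eqP ->.
  rewrite normrN normrZ ger0_norm ?invr_ge0 ?ler0n //.
  apply: ler_wpM2l; first by rewrite invr_ge0 ler0n.
  apply: (poly_bound N (fun j => c j.+1)); rewrite invr_ge0 ler0n /= invr_le1 ?ler1n ?ltr0n // unitfE pnatr_eq0 //.
rewrite E c0 add0r (IH (fun j => c j.+1)) ?scaler0 // => k Hk.
have := H k Hk; rewrite E c0 add0r => /eqP; rewrite scaler_eq0 => /orP[|/eqP //].
by rewrite invr_eq0 pnatr_eq0.
Qed.

Hypothesis mnorm : forall x y, `|m x y| <= `|x| * `|y|.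

Definition FO (g : R -> B) a b := exists r : R -> B, exists M : R,
  (forall t, `|t| <= 1 -> `|r t| <= M) /\ forall t, g t = a + t *: (b + t *: r t).

Lemma FO_ext g g' a b : FO g a b -> (forall t, g t = g' t) -> FO g' a b.
Proof. by move=> [r [M [HM Hg]]] E; exists r, M; split => // t; rewrite -E. Qed.

Lemma FO_eq g a b a' b' : FO g a b -> a = a' -> b = b' -> FO g a' b'.
Proof. by move=> H <- <-. Qed.

Lemma FO_lin a b : FO (fun t => a + t *: b) a b.
Proof.
exists (fun _ => 0), 0; split => [t _|t]; first by rewrite normr0.
by rewrite scaler0 addr0.
Qed.

Lemma FO_const a : FO (fun _ => a) a 0.
Proof. by apply: (FO_ext (FO_lin a 0)) => t; rewrite scaler0 addr0. Qed.

Lemma FO_sub g h a b a' b' : FO g a b -> FO h a' b' ->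
  FO (fun t => g t - h t) (a - a') (b - b').
Proof.
move=> [r [M [HM Hg]]] [r' [M' [HM' Hh]]].
exists (fun t => r t - r' t), (M + M'); split => [t t1|t].
  by apply: (le_trans (ler_normB _ _)); apply: lerD; [exact: HM|exact: HM'].
rewrite Hg Hh !scalerDr !scalerN !opprD !addrA.
by rewrite [LHS](ACl ((1*4)*(2*5)*(3*6)))%AC /= !addrA.
Qed.

Lemma FO_mul g h a b a' b' : FO g a b -> FO h a' b' ->
  FO (fun t => m (g t) (h t)) (m a a') (m a b' + m b a').
Proof.
move=> [r [M [HM Hg]]] [r' [M' [HM' Hh]]].
have M0 : 0 <= M by apply: le_trans (HM 0 _); rewrite ?normr0 ?ler01.
have M0' : 0 <= M' by apply: le_trans (HM' 0 _); rewrite ?normr0 ?ler01.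
exists (fun t => m a (r' t) + m (r t) a' + m (b + t *: r t) (b' + t *: r' t)).
exists (`|a| * M' + M * `|a'| + (`|b| + M) * (`|b'| + M')); split => [t t1|t].
  have Hu : `|b + t *: r t| <= `|b| + M.
    apply: (le_trans (ler_normD _ _)); apply: lerD => //; rewrite normrZ.
    by apply: (le_trans (ler_wpM2r (normr_ge0 _) t1)); rewrite mul1r HM.
  have Hu' : `|b' + t *: r' t| <= `|b'| + M'.
    apply: (le_trans (ler_normD _ _)); apply: lerD => //; rewrite normrZ.
    by apply: (le_trans (ler_wpM2r (normr_ge0 _) t1)); rewrite mul1r HM'.
  apply: (le_trans (ler_normD _ _)); apply: lerD.
    apply: (le_trans (ler_normD _ _)); apply: lerD.
      by apply: (le_trans (mnorm _ _)); apply: ler_wpM2l => //; exact: HM'.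
    by apply: (le_trans (mnorm _ _)); apply: ler_wpM2r => //; exact: HM.
  apply: (le_trans (mnorm _ _)); apply: ler_pM => //.
have E1 : m a (h t) = m a a' + t *: (m a b' + t *: m a (r' t)).
  by rewrite Hh mDr mZr mDr mZr.
have E2 : m (b + t *: r t) (h t) =
    m b a' + t *: m (r t) a' + t *: m (b + t *: r t) (b' + t *: r' t).
  by rewrite [in LHS]Hh mDr mZr mDl mZl.
rewrite Hg mDl mZl E1 E2 !scalerDr !addrA.
by rewrite [LHS](ACl (1*2*4*3*5*6))%AC.
Qed.

Fixpoint Lp a b k := if k is k'.+1 then m a (Lp a b k') + m b (bpow m a k'.+1) else b.

Lemma FO_pow g a b k : FO g a b ->
  FO (fun t => bpow m (g t) k.+1) (bpow m a k.+1) (Lp a b k).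
Proof.
move=> H; elim: k => [|k IH]; first exact: H.
exact: (FO_mul H IH).
Qed.

Lemma FO_comm g a b z : FO g a b ->
  FO (fun t => m (g t) z - m z (g t)) (m a z - m z a) (m b z - m z b).
Proof.
move=> H; apply: (FO_eq (FO_sub (FO_mul H (FO_const z)) (FO_mul (FO_const z) H))).
  by [].
by rewrite m0r add0r m0l addr0.
Qed.

Lemma FO_zero g a b : FO g a b -> (forall t, g t = 0) -> b = 0.
Proof.
move=> [r [M [HM Hg]]] g0.
have a0 : a = 0 by have := g0 0; rewrite Hg scale0r addr0.
apply: (@small_zero b M 0%N) => k _.
have := g0 (k.+1%:R^-1); rewrite Hg a0 add0r => /eqP; rewrite scaler_eq0.
have kn0 : k.+1%:R^-1 != 0 :> R by rewrite invr_eq0 pnatr_eq0.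
rewrite (negPf kn0) /= addr_eq0 => /eqP ->.
rewrite normrN normrZ ger0_norm ?invr_ge0 ?ler0n //.
apply: ler_wpM2l; first by rewrite invr_ge0 ler0n.
apply: HM; rewrite ger0_norm ?invr_ge0 ?ler0n // invr_le1 ?ler1n ?ltr0n // unitfE pnatr_eq0 //.
Qed.

Hypothesis mprime : prime_alg m.

Definition Zc z := forall x, m z x = m x z.

Lemma central_cancel c v : Zc c -> c != 0 -> m c v = 0 -> v = 0.
Proof.
move=> Zcc c0 cv.
have [/eqP|//] : c = 0 \/ v = 0.
  apply: mprime => x; by rewrite Zcc -massoc cv m0r.
by rewrite (negPf c0).
Qed.

Lemma Zc_pow c k : Zc c -> Zc (bpow m c k.+1).
Proof.
move=> Zcc; elim: k => [//|k IH] x.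
by rewrite bpowS -massoc IH massoc Zcc -massoc.
Qed.

Lemma pow_nz c k : Zc c -> c != 0 -> bpow m c k.+1 != 0.
Proof.
move=> Zcc c0; elim: k => [//|k IH].
by apply/eqP; rewrite bpowS => /(central_cancel Zcc c0) /eqP; rewrite (negPf IH).
Qed.

Lemma Lp_central c w k : Zc c -> Lp c w k.+1 = (k.+2)%:R *: m (bpow m c k.+1) w.
Proof.
move=> Zcc; elim: k => [|k IH].
  by rewrite /= bpow1 -(Zcc w) scaler_nat mulr2n.
have -> : Lp c w k.+2 = m c (Lp c w k.+1) + m w (bpow m c k.+2) by [].
rewrite IH mZr massoc; change (m c (bpow m c k.+1)) with (bpow m c k.+2).
rewrite -(@Zc_pow c k.+1 Zcc w).
by rewrite -{2}[m (bpow m c k.+2) w]scale1r -scalerDl natr1.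
Qed.

Lemma comm_from_center c k :
  Zc c -> c != 0 -> (forall w (t : R), Zc (bpow m (c + t *: w) k.+2)) ->
  commutative_alg m.
Proof.
move=> Zcc c0 H w z.
set e := bpow m c k.+1.
have Ze : Zc e by exact: Zc_pow.
have e0 : e != 0 by exact: pow_nz.
have F1 := FO_comm z (FO_pow k.+1 (FO_lin c w)).
have := FO_zero F1 (fun t => _); rewrite Lp_central //.
move=> /(_ _) H1.
have : m (m e w) z = m z (m e w).
  have H2 : m ((k.+2)%:R *: m e w) z - m z ((k.+2)%:R *: m e w) = 0.
    by apply: H1 => t; rewrite H subrr.
  move: H2; rewrite mZl mZr -scalerBr => /eqP; rewrite scaler_eq0 pnatr_eq0 /=.
  by rewrite subr_eq0 => /eqP.
move=> H3.
apply/eqP; rewrite -subr_eq0; apply/eqP.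
apply: (central_cancel Ze e0).
by rewrite mBr massoc H3 massoc -(Ze z) -massoc subrr.
Qed.

Lemma nil_step k : (forall x, bpow m x k.+2 = 0) -> forall x, bpow m x k.+1 = 0.
Proof.
move=> H x.
suff [] : bpow m x k.+1 = 0 \/ bpow m x k.+1 = 0 by [].
  apply: mprime => y.
  have F1 := FO_pow k.+1 (FO_lin x y).
  have L0 := FO_zero F1 (fun t => H _).
  move: L0; rewrite /= => /(congr1 (m (bpow m x k.+1))).
  by rewrite m0r mDr massoc -bpowSr H m0l add0r massoc.
Qed.

Lemma nil_zero k : (forall x, bpow m x k.+1 = 0) -> forall x : B, x = 0.
Proof.
elim: k => [//|k IH] H; apply: IH; exact: nil_step.
Qed.

Lemma stageD k : (forall x, Zc (bpow m x k.+2)) -> commutative_alg m.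
Proof.
move=> H.
have [[x xn]|N] := pselect (exists x, bpow m x k.+2 != 0).
  exact: (@comm_from_center (bpow m x k.+2) k (H x) xn (fun w t => H _)).
have H0 : forall x, bpow m x k.+2 = 0.
  move=> x; case: (eqVneq (bpow m x k.+2) 0) => // xn; exfalso; apply: N; by exists x.
have := nil_zero H0 => Z0 x y; by rewrite (Z0 x) (Z0 y).
Qed.

Definition PE g := exists N, polyon N g.

Lemma PE_const a : PE (fun _ => a).
Proof. by exists 1%N; exact: polyon_const. Qed.

Lemma PE_add g h : PE g -> PE h -> PE (fun t => g t + h t).
Proof.
move=> [N Hg] [M Hh]; exists (maxn N M); apply: polyon_add.
  by apply: polyon_pad Hg; rewrite leq_maxl.
by apply: polyon_pad Hh; rewrite leq_maxr.
Qed.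

Lemma PE_shift g : PE g -> PE (fun t => t *: g t).
Proof. by move=> [N H]; exists N.+1; exact: polyon_shift. Qed.

Lemma PE_mul g h : PE g -> PE h -> PE (fun t => m (g t) (h t)).
Proof. by move=> [N Hg] [M Hh]; exists (N + M)%N; exact: polyon_mul. Qed.

Lemma PE_lin (L : B -> B) g :
  (forall x y, L (x + y) = L x + L y) ->
  (forall t j v, pts t -> L (t ^+ j *: v) = t ^+ j *: L v) ->
  PE g -> PE (fun t => L (g t)).
Proof. by move=> H1 H2 [N H]; exists N; exact: (polyon_lin H1 H2 H). Qed.

Lemma PE_opp g : PE g -> PE (fun t => - g t).
Proof.
apply: PE_lin => [x y|t j v _]; [exact: opprD|by rewrite scalerN].
Qed.

Lemma PE_sub g h : PE g -> PE h -> PE (fun t => g t - h t).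
Proof. by move=> Hg Hh; apply: PE_add Hg (PE_opp Hh). Qed.

Lemma PE_pow g k : PE g -> PE (fun t => bpow m (g t) k.+1).
Proof.
move=> H; elim: k => [//|k IH].
exact: (PE_mul H IH).
Qed.

Lemma PE_vanish g K : PE g -> (forall k, (K <= k)%N -> g (k.+1%:R^-1) = 0) ->
  g 1 = 0.
Proof.
move=> [N [c Hc]] H.
have pts1 : pts 1 by exists 0%N; rewrite invr1.
rewrite Hc //; apply: (vanish (K := K)) => k Hk.
by rewrite -Hc ?H //; exists k.
Qed.

Lemma fscale (f : B -> B) : (forall x y, f (x + y) = f x + f y) ->
  forall t j v, pts t -> f (t ^+ j *: v) = t ^+ j *: f v.
Proof.
move=> fadd t j v [n ->].
have fMn : forall w k, f (w *+ k) = f w *+ k.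
  have f0 : f 0 = 0.
    by have := fadd 0 0; rewrite addr0 => /eqP; rewrite -subr_eq0 opprD addrA subrr sub0r oppr_eq0 => /eqP.
  by move=> w; elim=> [|k IH]; rewrite ?mulr0n // !mulrS fadd IH.
rewrite exprVn -natrX.
set s := (n.+1 ^ j)%N.
have s0 : (s%:R : R) != 0 by rewrite pnatr_eq0 expn_eq0.
have -> : f v = f (s%:R^-1 *: v) *+ s.
  by rewrite -fMn -[_ *+ s]scaler_nat scalerKV.
by rewrite -[f _ *+ s]scaler_nat scalerK.
Qed.

Definition Fv (f : B -> B) p q x y :=
  f (jordan m (bpow m x p.+1) (bpow m y q.+1)) + lie_comm m (bpow m x p.+1) (bpow m y q.+1).

Lemma stageC (f : B -> B) (fadd : forall x y, f (x + y) = f x + f y) p q x0 y0 r :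
  0 < r ->
  (forall x y, `|x - x0| < r -> `|y - y0| < r -> Zc (Fv f p q x y)) ->
  forall x y, Zc (Fv f p q x y).
Proof.
move=> r0 Hloc x y z.
pose X := fun t : R => x0 + t *: (x - x0).
pose Y := fun t : R => y0 + t *: (y - y0).
pose g := fun t => m (Fv f p q (X t) (Y t)) z - m z (Fv f p q (X t) (Y t)).
have PX : PE X := PE_add (PE_const x0) (PE_shift (PE_const _)).
have PY : PE Y := PE_add (PE_const y0) (PE_shift (PE_const _)).
have PA := PE_pow p PX.
have PB := PE_pow q PY.
have PF : PE (fun t => Fv f p q (X t) (Y t)).
  apply: PE_add.
    exact: (PE_lin fadd (fscale fadd) (PE_add (PE_mul PA PB) (PE_mul PB PA))).
  exact: (PE_sub (PE_mul PA PB) (PE_mul PB PA)).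
have PG : PE g := PE_sub (PE_mul PF (PE_const z)) (PE_mul (PE_const z) PF).
set S := `|x - x0| + `|y - y0|.
have S0 : 0 <= S by rewrite addr_ge0.
set K := Num.truncn (S / r).
have HK : forall k, (K <= k)%N -> k.+1%:R^-1 * S < r.
  move=> k Hk.
  have H1 : S / r < k.+1%:R.
    apply: (lt_le_trans (truncnS_gt _)); rewrite ler_nat ltnS //.
  rewrite ltr_pdivrMr // in H1.
  by rewrite mulrC ltr_pdivrMr ?ltr0n // mulrC.
have g1 : g 1 = 0.
  apply: (PE_vanish PG (K := K)) => k Hk.
  set t := k.+1%:R^-1.
  have t0 : 0 <= t by rewrite invr_ge0 ler0n.
  have HXY : forall a a0 : B, `|a - a0| <= S -> `|(a0 + t *: (a - a0)) - a0| < r.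
    move=> a a0 Ha; rewrite addrAC subrr add0r normrZ ger0_norm //.
    apply: (le_lt_trans _ (HK k Hk)); exact: ler_wpM2l.
  have hx : `|x - x0| <= S by rewrite lerDl.
  have hy : `|y - y0| <= S by rewrite lerDr.
  have := Hloc (X t) (Y t) (HXY _ _ hx) (HXY _ _ hy).
  by rewrite /g => ->; rewrite subrr.
move: g1; rewrite /g /X /Y !scale1r !(addrC x0) !(addrC y0) !subrK.
by move=> /eqP; rewrite subr_eq0 => /eqP.
Qed.

Lemma mul_cont : continuous (fun xy : B * B => m xy.1 xy.2).
Proof.
move=> [a b]; apply/cvg_ballP => e e0.
set A := `|a|; set Bn := `|b|.
have A0 : 0 <= A := normr_ge0 _. 
have B0 : 0 <= Bn := normr_ge0 _.
set D := 2 * (A + Bn + 1).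
have D0 : 0 < D by rewrite /D; apply: mulr_gt0 => //; apply: ltr_wpDl; rewrite ?addr_ge0.
set d := Num.min 1 (e / D).
have d0 : 0 < d by rewrite lt_min ltr01 divr_gt0.
have d1 : d <= 1 by rewrite ge_min lexx.
have dD : d * D <= e by rewrite -ler_pdivlMr // ge_min lexx orbT.
exists (ball a d, ball b d); first by split; apply: nbhsx_ballx.
move=> -[x y] [/= bx by_].
rewrite -ball_normE /= in bx by_ *.
have key : m a b - m x y = m (a - x) b + m x (b - y) by rewrite mBl mBr addrA subrK.
rewrite key.
set u := `|a - x|; set v := `|b - y|; set w := `|x|.
have u0 : 0 <= u := normr_ge0 _. have v0 : 0 <= v := normr_ge0 _.
have wA : w <= A + u.
  have E : x = a - (a - x) by rewrite opprB addrC subrK.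
  by rewrite /w /A /u [in X in X <= _]E ler_normB.
apply: (le_lt_trans (ler_normD _ _)).
apply: (@le_lt_trans _ _ (u * Bn + w * v)).
  by apply: lerD; apply: mnorm.
rewrite /D in dD.
have bu : u < d by [].
have bv : v < d by [].
have h1 : u * Bn <= d * Bn by apply: ler_wpM2r => //; apply: ltW.
have h2 : w * v <= (A + 1) * d.
  apply: ler_pM => //; first exact: normr_ge0.
    by apply: (le_trans wA); rewrite lerD2l; apply: (le_trans (ltW bu)).
  exact: ltW.
nra.
Qed.

Lemma contM (T : topologicalType) (g h : T -> B) :
  continuous g -> continuous h -> continuous (fun t => m (g t) (h t)).
Proof.
move=> cg ch x.
apply: (@continuous_comp _ _ _ (fun t => (g t, h t)) (fun xy : B * B => m xy.1 xy.2)).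
  exact: (cvg_pair (cg x) (ch x)).
exact: mul_cont.
Qed.

Lemma contP (T : topologicalType) (g : T -> B) k :
  continuous g -> continuous (fun t => bpow m (g t) k.+1).
Proof.
move=> cg; elim: k => [//|k IH].
exact: (contM cg IH).
Qed.

Lemma contD (T : topologicalType) (g h : T -> B) :
  continuous g -> continuous h -> continuous (fun t => g t + h t).
Proof. by move=> cg ch x; apply: cvgD; [exact: cg|exact: ch]. Qed.

Lemma contB (T : topologicalType) (g h : T -> B) :
  continuous g -> continuous h -> continuous (fun t => g t - h t).
Proof. by move=> cg ch x; apply: cvgB; [exact: cg|exact: ch]. Qed.

Lemma closedE (f : B -> B) (fcont : continuous f) p q :
  closed [set xy : B * B | Zc (Fv f p q xy.1 xy.2)].
Proof.
have cfst : continuous (fun xy : B * B => xy.1) by move=> [a b]; exact: cvg_fst.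
have csnd : continuous (fun xy : B * B => xy.2) by move=> [a b]; exact: cvg_snd.
have cA := contP (k := p) cfst.
have cB := contP (k := q) csnd.
have cF : continuous (fun xy : B * B => Fv f p q xy.1 xy.2).
  apply: contD; last exact: (contB (contM cA cB) (contM cB cA)).
  move=> xy; apply: continuous_comp; last exact: fcont.
  exact: (contD (contM cA cB) (contM cB cA)).
pose G z := fun xy : B * B => m (Fv f p q xy.1 xy.2) z - m z (Fv f p q xy.1 xy.2).
have -> : [set xy : B * B | Zc (Fv f p q xy.1 xy.2)] =
  \bigcap_(z in setT) ((fun xy => `|G z xy|) @^-1` [set x : R | x <= 0]).
  apply/seteqP; split => xy /=.
    by move=> H z _; rewrite /= /G H subrr normr0.
  move=> H z; have := H z I; rewrite /= normr_le0 /G subr_eq0 => /eqP //.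
apply: closed_bigI => z _.
have cG : continuous (G z).
  exact: (contB (contM cF (fun _ => cvg_cst _)) (contM (fun _ => cvg_cst _) cF)).
have cN : continuous (fun xy => `|G z xy|).
  move=> xy; apply: continuous_comp; first exact: cG.
  exact: norm_continuous.
have H0 := @closed_le R 0.
have := proj1 (continuous_closedP _) cN _ H0.
by [].
Qed.

Lemma Zc_inv (f : B -> B) u : automorphism m f -> Zc (f u) -> Zc u.
Proof.
move=> [fbij fadd fmul] H x.
apply: (bij_inj fbij); by rewrite !fmul H.
Qed.

Lemma Zc_half u : Zc (u + u) -> Zc u.
Proof.
move=> H x.
have E : (2%:R : R) *: (m u x - m x u) = 0.
  by rewrite scaler_nat mulr2n addrACA -opprD -mDl -mDr H subrr.
move: E => /eqP; rewrite scaler_eq0 pnatr_eq0 /= subr_eq0 => /eqP //.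
Qed.

End Alg.
HB.instance Definition _ (R : realType) (U V : completeNormedModType R) :=
  isPointed.Build (U * V)%type (0, 0).

Section ProdComplete.
Variables (R : realType) (U V : completeNormedModType R).

Lemma prod_complete (F : set_system (U * V)%type) : ProperFilter F -> cauchy F -> cvg F.
Proof.
move=> FF Fcc; have Fc := (proj1 (@cauchyP R [the pseudoMetricType R of (U * V)%type] F FF)) Fcc.
have c1 : cauchy (fst @ F).
  apply: cauchy_exP => e e0; have [[x1 x2] Fx] := Fc e e0; exists x1.
  suff : F (fst @^-1` ball x1 e) by [].
  by apply: (filterS _ Fx) => -[y1 y2] [].
have c2 : cauchy (snd @ F).
  apply: cauchy_exP => e e0; have [[x1 x2] Fx] := Fc e e0; exists x2.
  suff : F (snd @^-1` ball x2 e) by [].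
  by apply: (filterS _ Fx) => -[y1 y2] [].
have /cvg_ex [l1 H1] : cvg (fst @ F) by exact: cauchy_cvg.
have /cvg_ex [l2 H2] : cvg (snd @ F) by exact: cauchy_cvg.
apply/cvg_ex; exists (l1, l2).
have E : (fun x : U * V => (x.1, x.2)) = id by apply: funext => -[].
have := cvg_pair H1 H2; rewrite E => /(_ _ _ _) H.
move=> A /H; by [].
Qed.

End ProdComplete.

HB.instance Definition _ (R : realType) (U V : completeNormedModType R) :=
  Uniform_isComplete.Build (U * V)%type (@prod_complete R U V).


Lemma baire_cover (R : realType) (W : completeNormedModType R) (O : set W)
    (C : nat -> set W) :
  open O -> O !=set0 -> (forall i, closed (C i)) -> O `<=` \bigcup_i C i ->
  exists i x (r : R), 0 < r /\ ball x r `<=` O `&` C i.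
Proof.
move=> opO [ w0 Ow0] cC cov.
apply: contrapT => nH.
have HF : forall i, open (~` (C i `&` closure O)) /\ dense (~` (C i `&` closure O)).
  move=> i; split.
    exact: closed_openC (closedI (cC i) (@closed_closure _ O)).
  move=> G [g Gg] oG; apply: contrapT => Gn.
  have sub : G `<=` C i `&` closure O.
    move=> y Gy; apply: contrapT => ny; apply: Gn; by exists y.
  have [y [Oy Gy]] : (O `&` G) !=set0.
    by apply: (proj2 (sub g Gg)); apply: open_nbhs_nbhs; split.
  have /nbhs_ballP [e e0 He] : nbhs y (G `&` O).
    by apply: open_nbhs_nbhs; split; [exact: openI|].
  apply: nH; exists i, y, e; split => // z /He [Gz Oz]; split => //.
  exact: (proj1 (sub z Gz)).
have D := Baire HF.
have [x [Ox Ix]] := D O (ex_intro _ w0 Ow0) opO.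
have [i _ Cix] := cov x Ox.
by apply: (Ix i I); split; [exact: Cix|exact: subset_closure].
Qed.

Unset Implicit Arguments.

Theorem theorem2p3 (R : realType) (B : completeNormedModType R)
    (mul : B -> B -> B) (H1 H2 : set B) (f : B -> B) :
  banach_algebra_mul mul ->
  prime_alg mul ->
  open H1 -> H1 !=set0 -> open H2 -> H2 !=set0 ->
  automorphism mul f -> continuous f ->
  (forall x y, H1 x -> H2 y ->
     exists p q : nat, [/\ (0 < p)%N, (0 < q)%N &
       alg_center mul (f (jordan mul (bpow mul x p) (bpow mul y q))
                   + lie_comm mul (bpow mul x p) (bpow mul y q))]) ->
  commutative_alg mul.
Proof.
move=> [massoc mlinl mlinr mnorm] mprime opH1 [h1 H1h1] opH2 [h2 H2h2] faut fcont Hcond.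
have fadd : forall x y, f (x + y) = f x + f y by case: faut.
pose E := fun p q => [set xy : B * B | Zc mul (Fv mul f p q xy.1 xy.2)].
pose C := fun i => if @unpickle (nat * nat)%type i is Some pq then E pq.1 pq.2 else set0.
have /nbhs_ballP [e1 e10 B1] : nbhs h1 H1 by apply: open_nbhs_nbhs; split.
have /nbhs_ballP [e2 e20 B2] : nbhs h2 H2 by apply: open_nbhs_nbhs; split.
set e := Num.min e1 e2.
have e0 : 0 < e by rewrite lt_min e10 e20.
pose W := [the completeNormedModType R of (B * B)%type].
pose O := @ball _ W (h1, h2) e.
have opO : open O by exact: ball_open.
have O0 : O !=set0 by exists (h1, h2); exact: ballxx.
have cC : forall i, closed (C i).
  move=> i; rewrite /C; case: unpickle => [[p q]|]; last exact: closed0.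
  exact: (closedE mlinl mlinr mnorm fcont).
have cov : O `<=` \bigcup_i C i.
  move=> [x y] [/= bx by_].
  have Hx : H1 x by apply: B1; apply: le_ball bx; rewrite ge_min lexx.
  have Hy : H2 y by apply: B2; apply: le_ball by_; rewrite ge_min lexx orbT.
  have [p [q [p0 q0 Hc]]] := Hcond x y Hx Hy.
  exists (pickle (p.-1, q.-1)) => //; rewrite /C pickleK /E /= /Fv !prednK //.
have [i [[x0 y0] [r [r0 Hb]]]] := baire_cover opO O0 cC cov.
have Hci : C i (x0, y0) by apply: (proj2 (Hb _ (ballxx _ r0))).
move: Hci Hb; rewrite /C; case: unpickle => [[p q]|] // _ Hb.
have Hloc : forall x y, `|x - x0| < r -> `|y - y0| < r -> Zc mul (Fv mul f p q x y).
  move=> x y hx hy.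
  have : ball (x0, y0) r (x, y).
    by split; rewrite -ball_normE /= distrC.
  by move=> /Hb [_].
have Hall := stageC mlinl mlinr fadd r0 Hloc.
apply: (stageD massoc mlinl mlinr mnorm mprime (k := (p + q)%N)) => x.
have := Hall x x; rewrite /Fv /jordan /lie_comm !(bpowD massoc) [(q + p)%N]addnC.
rewrite subrr addr0 => H.
apply: (Zc_half mlinl mlinr); exact: (Zc_inv faut H).
Qed.
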